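(* Let $\widetilde{\Sigma}=\widetilde{\Sigma}_1\uplus\cdots\uplus\widetilde{\Sigma}_n$ with pairwise disjoint visibly pushdown alphabets $\widetilde{\Sigma}_i$. For any visibly pushdown contextual order $\prec$ on $\widetilde{\Sigma}$, there exists a coherent visibly pushdown contextual order $\prec'$ on $\widetilde{\Sigma}$ such that $\mathrm{red}_\prec(P_1\bowtie\cdots\bowtie P_n)=\mathrm{red}_{\prec'}(P_1\parallel\cdots\parallel P_n)$ for any well-matched languages $P_1\subseteq\widetilde{\Sigma}_1^*,\ldots,P_n\subseteq\widetilde{\Sigma}_n^*$.
   Context: A visibly pushdown (VP) alphabet is a finite alphabet partitioned into calls, returns and internals; write $\Sigma^{\mathsf{call}}_i,\Sigma^{\mathsf{ret}}_i$ for the calls and returns of $\widetilde{\Sigma}_i$; $\widetilde{\Sigma}$ has as calls/returns/internals the unions. Calls and returns in a word are matched like opening and closing parentheses (internals ignored); unmatched ones are pending; a word is well-matched if none are pending. A visibly pushdown automaton (VPA) is a pushdown automaton with bottom symbol $\bot$ that pushes one non-$\bot$ symbol on each call, pops the top on each return (reading $\bot$ on empty stack without removing it), and leaves the stack unchanged on internals; it is deterministic if it has one initial state and at most one transition per configuration and letter, and complete if it has at least one. Shuffle: $P_1\parallel\cdots\parallel P_n=\{w\in\widetilde{\Sigma}^*:\Pi_{\widetilde{\Sigma}_i}(w)\in P_i\ \forall i\}$, $\Pi_{\widetilde{\Sigma}_i}$ erasing letters outside $\widetilde{\Sigma}_i$. A word is well-nested if every matched call–return pair consists of letters from the same $\widetilde{\Sigma}_k$;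 the well-nested shuffle $P_1\bowtie\cdots\bowtie P_n$ is the set of well-nested words of $P_1\parallel\cdots\parallel P_n$. $\mathbb{I}=\{(a,b):a\in\widetilde{\Sigma}_i,b\in\widetilde{\Sigma}_j,i\ne j\}$, $\equiv_{\mathbb{I}}$ the least reflexive transitive relation with $uabv\equiv_{\mathbb{I}}ubav$ for $(a,b)\in\mathbb{I}$. A contextual order is a map $\prec$ from $\widetilde{\Sigma}^*$ to strict total orders on $\widetilde{\Sigma}$; it induces $\preceq$: $\sigma\preceq\rho$ iff $\sigma$ is a prefix of $\rho$ or $\sigma=\alpha a\beta$, $\rho=\alpha b\gamma$ with $a\prec_\alpha b$. $\mathrm{red}_\prec(L)=\{w\in L:\forall u\in L,(u\equiv_{\mathbb{I}}w\wedge u\preceq w)\Rightarrow u=w\}$. $\prec$ is visibly pushdown if there is a complete deterministic VPA $A$ over $\widetilde{\Sigma}$ and a map $\mathsf{ord}$ from its states to strict total orders on $\widetilde{\Sigma}$ with $\prec_w=\mathsf{ord}(q)$, $q$ the state reached by $A$ after reading $w$. $\prec$ is coherent if for every $u\in\widetilde{\Sigma}^*$ and every $i$: if $u$ has pending calls and the last one is in $\Sigma^{\mathsf{call}}_i$, then $a\prec_u r$ for all $a\in\widetilde{\Sigma}_i$ and $r\in\bigcup_{j\ne i}\Sigma^{\mathsf{ret}}_j$. *)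

(* Defs.v *)
From mathcomp Require Import all_boot.
Set Implicit Arguments. Unset Strict Implicit. Unset Printing Implicit Defensive.

Inductive vpkind := Call | Ret | Int.

Section VP.
(* The global alphabet Sigma~ = Sigma~_1 ⊎ ... ⊎ Sigma~_n is a finite type;
   [comp a] is the index i of the component Sigma~_i containing a, and
   [kind a] says whether a is a call, return or internal. *)
Variables (n : nat) (Sigma : finType) (comp : Sigma -> 'I_n) (kind : Sigma -> vpkind).

(* Scan of a word: returns the list of matched (call, return) letter pairs,
   the stack of pending calls (head = last pending call), and the number of
   pending returns. *)
Fixpoint scan (w : seq Sigma) (st : seq Sigma)
  : seq (Sigma * Sigma) * seq Sigma * nat :=
  match w with
  | [::] => ([::], st, 0)
  | a :: w' =>
    match kind a with
    | Call => scan w' (a :: st)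
    | Ret =>
      match st with
      | [::] => let: (p, s, r) := scan w' [::] in (p, s, r.+1)
      | c :: st' => let: (p, s, r) := scan w' st' in ((c, a) :: p, s, r)
      end
    | Int => scan w' st
    end
  end.

Definition matched_pairs (w : seq Sigma) := (scan w [::]).1.1.
Definition pending_calls (w : seq Sigma) := (scan w [::]).1.2.
Definition pending_returns (w : seq Sigma) := (scan w [::]).2.

Definition well_matched (w : seq Sigma) : Prop :=
  pending_calls w = [::] /\ pending_returns w = 0.

Definition well_nested (w : seq Sigma) : Prop :=
  forall c r, (c, r) \in matched_pairs w -> comp c = comp r.

Definition proj (i : 'I_n) (w : seq Sigma) := [seq a <- w | comp a == i].

Definition shuffle (P : 'I_n -> seq Sigma -> Prop) (w : seq Sigma) : Prop :=
  forall i, P i (proj i w).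

Definition wn_shuffle (P : 'I_n -> seq Sigma -> Prop) (w : seq Sigma) : Prop :=
  shuffle P w /\ well_nested w.

Definition indep (a b : Sigma) : Prop := comp a <> comp b.

Inductive trace_equiv : seq Sigma -> seq Sigma -> Prop :=
  | te_refl w : trace_equiv w w
  | te_swap u a b v w : indep a b ->
      trace_equiv (u ++ b :: a :: v) w -> trace_equiv (u ++ a :: b :: v) w.

Definition strict_total (r : rel Sigma) : Prop :=
  [/\ irreflexive r, transitive r & forall a b, a != b -> r a b || r b a].

Definition contextual_order (prec : seq Sigma -> rel Sigma) : Prop :=
  forall u, strict_total (prec u).

Definition ctx_le (prec : seq Sigma -> rel Sigma) (s r : seq Sigma) : Prop :=
  prefix s r \/
  exists alpha a b beta gamma,
    s = alpha ++ a :: beta /\ r = alpha ++ b :: gamma /\ prec alpha a b.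

Definition red (prec : seq Sigma -> rel Sigma) (L : seq Sigma -> Prop)
    (w : seq Sigma) : Prop :=
  L w /\ forall u, L u -> trace_equiv u w -> ctx_le prec u w -> u = w.

(* Complete deterministic VPA over Sigma (bottom symbol represented by None).
   Transition functions are total (completeness); the one used on a letter is
   selected by its kind. *)
Record dvpa := DVPA {
  vstate : finType;
  vstack : finType;
  vinit : vstate;
  vcall : vstate -> Sigma -> vstate * vstack;
  vret : vstate -> option vstack -> Sigma -> vstate;
  vint : vstate -> Sigma -> vstate
}.

Fixpoint vrun (A : dvpa) (q : vstate A) (st : seq (vstack A)) (w : seq Sigma)
  : vstate A :=
  match w with
  | [::] => q
  | a :: w' =>
    match kind a with
    | Call => let: (q', g) := vcall q a in vrun q' (g :: st) w'
    | Ret =>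
      match st with
      | [::] => vrun (vret q None a) [::] w'
      | g :: st' => vrun (vret q (Some g) a) st' w'
      end
    | Int => vrun (vint q a) st w'
    end
  end.

Definition reach (A : dvpa) (w : seq Sigma) : vstate A := vrun (vinit A) [::] w.

Definition vp_ctx_order (prec : seq Sigma -> rel Sigma) : Prop :=
  contextual_order prec /\
  exists (A : dvpa) (ord : vstate A -> rel Sigma),
    (forall q, strict_total (ord q)) /\
    forall w a b, prec w a b = ord (reach A w) a b.

Definition coherent (prec : seq Sigma -> rel Sigma) : Prop :=
  forall u c rest, pending_calls u = c :: rest ->
    forall a r, comp a = comp c -> kind r = Ret -> comp r <> comp c ->
      prec u a r.

End VP.

(* Main.v *)
Require Import Defs.
From mathcomp Require Import all_boot.
Set Implicit Arguments. Unset Strict Implicit. Unset Printing Implicit Defensive.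

Section Aux.
Variables (n : nat) (Sigma : finType) (comp : Sigma -> 'I_n) (kind : Sigma -> vpkind).

Lemma scan_cat x y st :
  scan kind (x ++ y) st =
  ((scan kind x st).1.1 ++ (scan kind y (scan kind x st).1.2).1.1,
   (scan kind y (scan kind x st).1.2).1.2,
   (scan kind x st).2 + (scan kind y (scan kind x st).1.2).2).
Proof.
elim: x st => [|a x IH] st /=; first by case: (scan kind y st) => [[]].
case: (kind a) => //; case: st => [|c st].
- rewrite IH; by case: (scan kind x [::]) => [[p s] r].
- rewrite IH; by case: (scan kind x st) => [[p s] r].
Qed.


Definition samec (p : Sigma * Sigma) := comp p.1 == comp p.2.
Definition wnb w := all samec (matched_pairs kind w).

Lemma wnbP w : reflect (well_nested comp kind w) (wnb w).
Proof.
apply: (iffP allP) => H.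
- move=> c r /H; by move/eqP.
- move=> [c r] /H /eqP; by rewrite /samec /=.
Qed.

Lemma wnb_cat x y : wnb (x ++ y) =
  wnb x && all samec (scan kind y (pending_calls kind x)).1.1.
Proof. by rewrite /wnb /matched_pairs /pending_calls scan_cat all_cat. Qed.

Lemma pair_at alpha x g c s : kind x = Ret -> pending_calls kind alpha = c :: s ->
  (c, x) \in matched_pairs kind (alpha ++ x :: g).
Proof.
move=> Kx Ha; rewrite /matched_pairs scan_cat; rewrite /pending_calls in Ha.
rewrite Ha /= Kx; case: (scan kind g s) => [[p s'] r].
by rewrite mem_cat /= inE eqxx orbT.
Qed.

Lemma proj_stack i x st : all samec (scan kind x st).1.1 ->
  (scan kind [seq a <- x | comp a == i] [seq c <- st | comp c == i]).1.2
  = [seq c <- (scan kind x st).1.2 | comp c == i].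
Proof.
elim: x st => [|a x IH] st //=.
case Ka: (kind a); case Ha: (comp a == i) => /=; rewrite ?Ka.
- move=> H; have := IH _ H; by rewrite /= Ha.
- move=> H; have := IH _ H; by rewrite /= Ha.
- case: st => [|c st].
  + case E: (scan kind x [::]) => [[p s] r] /= H.
    have := IH [::]; rewrite E /=; move/(_ H) => <-.
    by case: (scan kind _ [::]) => [[p2 s2] r2].
  + case E: (scan kind x st) => [[p s] r] /= /andP [Hc H].
    have Hci : comp c == i by rewrite /samec /= in Hc; rewrite (eqP Hc).
    rewrite Hci /= ?Ka.
    have := IH st; rewrite E /=; move/(_ H) => <-.
    by case: (scan kind _ _) => [[p2 s2] r2].
- case: st => [|c st].
  + case E: (scan kind x [::]) => [[p s] r] /= H.
    have := IH [::]; rewrite E /=; by move/(_ H) => <-.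
  + case E: (scan kind x st) => [[p s] r] /= /andP [Hc H].
    have Hci : comp c == i = false by rewrite /samec /= in Hc; rewrite (eqP Hc).
    rewrite Hci /=.
    have := IH st; rewrite E /=; by move/(_ H) => <-.
- by move=> H; have := IH _ H.
- by move=> H; have := IH _ H.
Qed.


Lemma te_proj u w : trace_equiv comp u w -> forall i, proj comp i u = proj comp i w.
Proof.
elim => // u0 a b v w0 Hab _ IH i; rewrite -IH /proj !filter_cat /=.
case Ea: (comp a == i); case Eb: (comp b == i) => //=.
by exfalso; apply: Hab; rewrite (eqP Ea) (eqP Eb).
Qed.

Lemma te_size u w : trace_equiv comp u w -> size u = size w.
Proof. elim => // u0 a b v w0 Hab _ IH; by rewrite -IH !size_cat. Qed.

Lemma te_cons b u w : trace_equiv comp u w -> trace_equiv comp (b :: u) (b :: w).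
Proof.
elim => [w0|u0 a c v w0 Hac _ IH]; first exact: te_refl.
exact: (@te_swap _ _ comp (b :: u0) a c v (b :: w0) Hac IH).
Qed.

Lemma move_left pre b u1 u2 z : all (fun x => comp x != comp b) u1 ->
  trace_equiv comp (pre ++ b :: u1 ++ u2) z -> trace_equiv comp (pre ++ u1 ++ b :: u2) z.
Proof.
elim: u1 pre => [|x u1 IH] pre //= /andP [Hx H] T.
have T' : trace_equiv comp ((pre ++ [:: x]) ++ b :: u1 ++ u2) z.
  rewrite -catA /=; apply: (@te_swap _ _ comp pre x b (u1 ++ u2) z) => //.
  by apply/eqP.
by have := IH _ H T'; rewrite -catA.
Qed.

Lemma filter_split (p : pred Sigma) s e t : filter p s = e :: t ->
  exists s1 s2, [/\ s = s1 ++ e :: s2, filter p s1 = [::], all (predC p) s1, p e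
    & filter p s2 = t].
Proof.
elim: s => [|x s IH] //=.
case Px: (p x).
  case=> <- <-.
  by exists [::], s.
move/IH=> [s1 [s2 [-> F A Pe Ft]]].
by exists (x :: s1), s2; split => //=; rewrite Px.
Qed.

Lemma proj_te u w : (forall i, proj comp i u = proj comp i w) -> trace_equiv comp u w.
Proof.
elim: w u => [|b w IH] u H.
- case: u H => [|x u] H; first exact: te_refl.
  by have := H (comp x); rewrite /proj /= eqxx.
- have Hb := H (comp b); rewrite /proj /= eqxx in Hb.
  have [u1 [u2 [Eu F1 A1 _ F2]]] := filter_split Hb.
  have H' : forall i, proj comp i (u1 ++ u2) = proj comp i w.
    move=> i; have := H i; rewrite /proj Eu !filter_cat /=.
    case: (eqVneq (comp b) i) => [<-|ne]; first by rewrite F1 F2.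
    by [].
  subst u; apply: (@move_left [::] b u1 u2 (b :: w) A1) => /=.
  by apply: te_cons; exact: IH.
Qed.

Lemma swap_proj e r1 r2 : [seq x <- r1 | comp x == comp e] = [::] ->
  forall j, proj comp j (e :: r1 ++ r2) = proj comp j (r1 ++ e :: r2).
Proof.
move=> F1 j; rewrite /proj /= !filter_cat /=.
case: (eqVneq (comp e) j) => [<-|ne]; first by rewrite F1 ?eqxx.
by [].
Qed.


Lemma proj_cat i a b : proj comp i (a ++ b) = proj comp i a ++ proj comp i b.
Proof. exact: filter_cat. Qed.

Lemma complete x r : wnb x -> (forall i, well_matched kind (proj comp i (x ++ r))) ->
  exists y, (forall i, proj comp i y = proj comp i r) /\ wnb (x ++ y).
Proof.
have [N] := ubnP (size r); elim: N x r => // N IH x r Hs Hx Hwm.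
case Er: r => [|e0 r0].
  by exists [::]; rewrite cats0.
rewrite -Er.
have [i [e [t [Ept Hi]]]] : exists i e t, proj comp i r = e :: t /\
    (forall c s, pending_calls kind x = c :: s -> i = comp c).
  case Ep: (pending_calls kind x) => [|c s].
    exists (comp e0); rewrite Er /proj /= eqxx; by eexists _, _.
  exists (comp c).
  case Epr: (proj comp (comp c) r) => [|e t]; last first.
    by exists e, t; split => // c' s' [->].
  exfalso; have := Hwm (comp c); rewrite proj_cat Epr cats0 => -[Hpc _].
  have := proj_stack (comp c) Hx; rewrite /= -/(proj comp (comp c) x).
  move: Hpc; rewrite /pending_calls => ->; rewrite /pending_calls in Ep.
  by rewrite Ep /= eqxx.
rewrite /proj in Ept.
have [r1 [r2 [Er' F1 A1 Pe F2]]] := filter_split Ept.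
have Wx' : wnb (x ++ [:: e]).
  rewrite wnb_cat Hx /=; case: (kind e) => //.
  case Ep: (pending_calls kind x) => [|c s] //=.
  by rewrite andbT /samec /= -(Hi _ _ Ep) eq_sym Pe.
rewrite -(eqP Pe) in F1.
have Hpr : forall j, proj comp j (x ++ e :: r1 ++ r2) = proj comp j (x ++ r).
  by move=> j; rewrite !proj_cat swap_proj // Er'.
have Hs' : size (r1 ++ r2) < N.
  by move: Hs; rewrite Er' !size_cat /= addnS.
have [y' [Hy' Wy']] := IH (x ++ [:: e]) (r1 ++ r2) Hs' Wx'
  (fun j => ltac:(rewrite -catA /= Hpr; exact: Hwm)).
exists (e :: y'); split.
  move=> j; rewrite -cat1s proj_cat Hy' -proj_cat cat1s Er' swap_proj //.
by rewrite -cat1s catA.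
Qed.

Lemma first_bad w : ~~ wnb w -> exists alpha r g c s,
  [/\ w = alpha ++ r :: g, wnb alpha, kind r = Ret, pending_calls kind alpha = c :: s
    & comp c != comp r].
Proof.
elim/last_ind: w => [|x e IH]; first by [].
rewrite -cats1 wnb_cat; case Hx: (wnb x) => /=; last first.
  move=> _; have [alpha [r [g [c [s [-> H1 H2 H3 H4]]]]]] := IH (negbT Hx).
  by exists alpha, r, (g ++ [:: e]), c, s; split => //; rewrite -catA.
case Ke: (kind e) => //; case Ep: (pending_calls kind x) => [|c s] //=.
rewrite andbT /samec /= => H.
by exists x, e, [::], c, s.
Qed.

Definition isRet (x : Sigma) := if kind x is Ret then true else false.
Definition badt (t : option Sigma) (x : Sigma) :=
  isRet x && (if t is Some c then comp x != comp c else false).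
Definition mk (r : rel Sigma) (t : option Sigma) : rel Sigma :=
  fun a b => if badt t a == badt t b then r a b else badt t b.

Lemma mk_st r t : strict_total r -> strict_total (mk r t).
Proof.
case=> Hirr Htr Htot; split.
- by move=> a; rewrite /mk eqxx; exact: Hirr.
- move=> b a c; rewrite /mk.
  case: (badt t a); case: (badt t b); case: (badt t c) => //=; exact: Htr.
- move=> a b ab; rewrite /mk.
  case: (badt t a); case: (badt t b) => //=; exact: Htot.
Qed.

Lemma notbad alpha x g : wnb (alpha ++ x :: g) ->
  badt (ohead (pending_calls kind alpha)) x = false.
Proof.
rewrite /badt /isRet; case Kx: (kind x) => //.
case Ep: (pending_calls kind alpha) => [|c s] //= /wnbP W.
by rewrite (W _ _ (pair_at g Kx Ep)) eqxx.
Qed.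

Lemma okbad alpha x : wnb alpha -> badt (ohead (pending_calls kind alpha)) x = false ->
  wnb (alpha ++ [:: x]).
Proof.
rewrite wnb_cat => -> /=; rewrite /badt /isRet; case: (kind x) => //.
case: (pending_calls kind alpha) => [|c s] //= H.
rewrite andbT /samec /= eq_sym; exact: (negbFE H).
Qed.

Lemma wnb_pre alpha y : wnb (alpha ++ y) -> wnb alpha.
Proof. by rewrite wnb_cat => /andP []. Qed.

Lemma cat_mid alpha (a b : Sigma) y g : alpha ++ a :: y = alpha ++ b :: g -> a = b.
Proof.
move=> E; have := congr1 (fun s => nth a s (size alpha)) E.
by rewrite /= !nth_cat ltnn subnn.
Qed.

Definition A' (A : dvpa Sigma) : dvpa Sigma :=
  @DVPA Sigma (vstate A * option Sigma)%type (vstack A * option Sigma)%type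
    (vinit A, None)
    (fun qt a => (((vcall qt.1 a).1, Some a), ((vcall qt.1 a).2, qt.2)))
    (fun qt og a => match og with
                    | None => (vret qt.1 None a, None)
                    | Some gt => (vret qt.1 (Some gt.1) a, gt.2) end)
    (fun qt a => (vint qt.1 a, qt.2)).

Fixpoint inv (A : dvpa Sigma) (t : option Sigma) (st : seq (vstack A * option Sigma))
  (s : seq Sigma) : Prop :=
  match st, s with
  | [::], [::] => t = None
  | gt :: st', c :: s' => t = Some c /\ inv gt.2 st' s'
  | _, _ => False
  end.

Lemma inv_head A t st s : @inv A t st s -> t = ohead s.
Proof. by case: st s => [|[g t'] st] [|c s] //= []. Qed.

Lemma sim A w : forall q t st s, @inv A t st s ->
  @vrun _ kind (A' A) (q, t) st w =
  (vrun kind q (map fst st) w, ohead (scan kind w s).1.2).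
Proof.
elim: w => [|a w IH] q t st s Hinv /=; first by rewrite (inv_head Hinv).
case: (kind a).
- case E: (vcall q a) => [q' g] /=.
  by rewrite (IH q' (Some a) ((g, t) :: st) (a :: s)).
- case: st s Hinv => [|[g t'] st] [|c s] //= Hinv.
  + rewrite (IH _ None [::] [::]) //.
    by case: (scan kind w [::]) => [[p s'] r].
  + case: Hinv => _ Hinv.
    rewrite (IH _ t' st s) //.
    by case: (scan kind w s) => [[p s'] r].
- by rewrite (IH _ t st s).
Qed.

Lemma reach_A' A w :
  reach kind (A' A) w = (reach kind A w, ohead (pending_calls kind w)).
Proof. exact: (@sim A w (vinit A) None [::] [::]). Qed.

End Aux.

Theorem lemma4p3 (n : nat) (Sigma : finType) (comp : Sigma -> 'I_n)
    (kind : Sigma -> vpkind) (prec : seq Sigma -> rel Sigma) :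
  vp_ctx_order kind prec ->
  exists prec' : seq Sigma -> rel Sigma,
    vp_ctx_order kind prec' /\ coherent comp kind prec' /\
    forall P : 'I_n -> seq Sigma -> Prop,
      (forall i w, P i w -> all (fun a => comp a == i) w /\ well_matched kind w) ->
      forall w,
        red comp prec (wn_shuffle comp kind P) w <->
        red comp prec' (shuffle comp P) w.
Proof.
move=> [Hco [A [ord [Hord Hprec]]]].
pose prec' := fun w => mk comp kind (prec w) (ohead (pending_calls kind w)).
exists prec'; split; [|split].
- split; first by move=> u; apply: mk_st; exact: Hco.
  exists (A' A), (fun qt : vstate A * option Sigma => mk comp kind (ord qt.1) qt.2).
  split; first by move=> qt; apply: mk_st; exact: Hord.
  by move=> w a b; rewrite /prec' reach_A' /= /mk Hprec.
- move=> u c rest Hpc a r Ha Kr Hr.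
  rewrite /prec' /mk Hpc /= /badt /isRet Kr Ha eqxx andbF.
  have -> : comp r != comp c by apply/eqP.
  by [].
- move=> P HP w; split.
  + case=> [[Lw /wnbP Ww] Hmin]; split; first exact: Lw.
    move=> u Lu Tu Cu.
    have Hpj := te_proj Tu.
    move: Cu; rewrite /ctx_le => -[Hpre | [alpha [a [b [beta [gamma [Eu [Ew Hab]]]]]]]].
      have Hsz := te_size Tu.
      by move: Hpre; rewrite prefixE Hsz take_size => /eqP ->.
    have Hb : badt comp kind (ohead (pending_calls kind alpha)) b = false.
      by apply: (@notbad _ _ comp kind alpha b gamma); rewrite -Ew.
    rewrite /prec' /mk Hb in Hab.
    case Ha: (badt _ _ _ a) in Hab => //=.
    have Wx : wnb comp kind (alpha ++ [:: a]).
      apply: okbad => //; apply: (@wnb_pre _ _ comp kind alpha (b :: gamma)).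
      by rewrite -Ew.
    have Hwm : forall i, well_matched kind (proj comp i ((alpha ++ [:: a]) ++ beta)).
      move=> i; rewrite -catA /= -Eu Hpj; exact: (proj2 (HP _ _ (Lw i))).
    have [y [Hy Wy]] := complete Wx Hwm.
    have Pu' : forall i, proj comp i ((alpha ++ [:: a]) ++ y) = proj comp i w.
      by move=> i; rewrite proj_cat Hy -proj_cat -catA /= -Eu Hpj.
    have := Hmin ((alpha ++ [:: a]) ++ y).
    have Hcon : ctx_le prec ((alpha ++ [:: a]) ++ y) w.
      right; exists alpha, a, b, y, gamma; split; [by rewrite -catA | by split].
    have Lu' : wn_shuffle comp kind P ((alpha ++ [:: a]) ++ y).
      by split; [move=> i; rewrite /proj in Pu' *; rewrite Pu'; exact: Lw | exact/wnbP].
    move/(_ Lu' (proj_te Pu') Hcon).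
    rewrite -catA /= Ew => /cat_mid Eab.
    by case: (Hco alpha) => Hirr _ _; rewrite Eab Hirr in Hab.
  + case=> Lw Hmin.
    have Ww : wnb comp kind w.
      apply/negPn/negP => /first_bad [alpha [r [g [c [s [Ew Wa Kr Ep Hcr]]]]]].
      have Hst := proj_stack (comp c) Wa.
      have Hwm := proj2 (HP _ _ (Lw (comp c))).
      case E: (proj comp (comp c) g) => [|e t].
        move: Hwm; rewrite Ew proj_cat /proj /= eq_sym (negbTE Hcr).
        rewrite /proj in E; rewrite E cats0 => -[Hpc _].
        move: Hst; rewrite /= /pending_calls in Hpc *; rewrite Hpc.
        by rewrite /pending_calls in Ep; rewrite Ep /= eqxx.
      rewrite /proj in E.
      have [g1 [g2 [Eg F1 _ Pe F2]]] := filter_split E.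
      have Pu : forall j, proj comp j (alpha ++ e :: (r :: g1) ++ g2) = proj comp j w.
        move=> j; rewrite Ew proj_cat swap_proj; first by rewrite -proj_cat Eg.
        by rewrite /= (eqP Pe) eq_sym (negbTE Hcr) F1.
      have Hcon : ctx_le prec' (alpha ++ e :: (r :: g1) ++ g2) w.
        right; exists alpha, e, r, ((r :: g1) ++ g2), (g1 ++ e :: g2); split; [|split].
        * by [].
        * by rewrite Ew Eg.
        * rewrite /prec' /mk Ep /badt /isRet Kr /= (eqP Pe) eqxx andbF.
          by rewrite eq_sym in Hcr; rewrite Hcr.
      have Lu : shuffle comp P (alpha ++ e :: (r :: g1) ++ g2).
        by move=> j; rewrite /proj in Pu *; rewrite Pu; exact: Lw.
      have := Hmin _ Lu (proj_te Pu) Hcon.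
      rewrite Ew Eg => /cat_mid Eer.
      by move: Pe Hcr; rewrite Eer => /eqP ->; rewrite eqxx.
    split; first by split => //; exact/wnbP.
    move=> u [Lu /wnbP Wu] Tu Cu.
    move: Cu; rewrite /ctx_le => -[Hpre | [alpha [a [b [beta [gamma [Eu [Ew Hab]]]]]]]].
      have Hsz := te_size Tu.
      by move: Hpre; rewrite prefixE Hsz take_size => /eqP ->.
    apply: Hmin Lu Tu _; right; exists alpha, a, b, beta, gamma; do 2!split => //.
    rewrite /prec' /mk.
    rewrite (@notbad _ _ comp kind alpha a beta); last by rewrite -Eu.
    by rewrite (@notbad _ _ comp kind alpha b gamma); last by rewrite -Ew.
Qed.
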